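(* Let $K \subset \mathbb R^3$ be a regular convex cone whose boundary is of class $C^k$, $k \geq 5$, and positively curved, and let $\gamma \subset \mathbb{RP}^2$ be the projective image of $\partial K$. Let $\alpha,\beta$ be $2\pi$-periodic real functions of class $C^{k-4}$, $C^{k-5}$ respectively, and let $y:\mathbb R \to \mathbb R^3$ be a $2\pi$-periodic solution of \[ y''' + 2\alpha y' + \alpha' y + \beta y = 0 \] such that $\det(y'',y',y) \equiv 1$, the projective image of $y$ is $\gamma$, and $y(t)$ makes exactly one turn around $K$ along $\partial K$ as $t$ runs over one period. If the eigenvalues of the monodromy of the equation $x'' + \frac12\alpha x = 0$ are not equal to $1$, then $\gamma$ does not possess a global periodic Forsyth–Laguerre parametrization.
   Context: A regular convex cone is a closed convex cone with non-empty interior containing no lines. ''Positively curved boundary'' means $\partial K\setminus\{0\}$ has everywhere positive curvature (transverse to the rays), so that $\gamma$ is a simple closed strictly convex curve without inflection points. The monodromy of $x''+\frac12\alpha x = 0$ is the matrix $T\in SL(2,\mathbb R)$ with $x(t+2\pi)=Tx(t)$ for a vector-valued solution $x:\mathbb R\to\mathbb R^2$ with linearly independent components (its conjugacy class does not depend on the choice of $x$). A global periodic Forsyth–Laguerre parametrization of $\gamma$ is a periodic parametrization of the whole closed curve $\gamma$ by a real variable $s$ (one period corresponding to one traversal of $\gamma$) for which $\gamma$ has a periodic lift $\tilde y(s)$ to $\mathbb R^3$ with $\det(\tilde y'',\tilde y',\tilde y)\equiv 1$ solving $\tilde y''' + 2\tilde\alpha\tilde y' + \tilde\alpha'\tilde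 y + \tilde\beta\tilde y = 0$ with $\tilde\alpha \equiv 0$ (derivatives with respect to $s$). *)

(* Defs.v *)
From Stdlib Require Import Reals.
From Coquelicot Require Import Coquelicot.
Open Scope R_scope.

Definition v3 : Type := (R * R * R)%type.
Definition vx (v : v3) : R := fst (fst v).
Definition vy (v : v3) : R := snd (fst v).
Definition vz (v : v3) : R := snd v.
Definition mkv (a b c : R) : v3 := (a, b, c).
Definition vzero : v3 := mkv 0 0 0.
Definition vadd (u v : v3) : v3 := mkv (vx u + vx v) (vy u + vy v) (vz u + vz v).
Definition vscal (c : R) (v : v3) : v3 := mkv (c * vx v) (c * vy v) (c * vz v).
Definition vdist (u v : v3) : R :=
  sqrt ((vx u - vx v)^2 + (vy u - vy v)^2 + (vz u - vz v)^2).

Definition det3 (a b c : v3) : R :=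
  vx a * (vy b * vz c - vz b * vy c)
  - vx b * (vy a * vz c - vz a * vy c)
  + vx c * (vy a * vz b - vz a * vy b).

Definition closed_set (K : v3 -> Prop) : Prop :=
  forall x, (forall e, 0 < e -> exists y, K y /\ vdist x y < e) -> K x.
Definition interior_pt (K : v3 -> Prop) (x : v3) : Prop :=
  exists e, 0 < e /\ forall y, vdist x y < e -> K y.
Definition closure_pt (K : v3 -> Prop) (x : v3) : Prop :=
  forall e, 0 < e -> exists y, K y /\ vdist x y < e.
Definition boundary (K : v3 -> Prop) (x : v3) : Prop :=
  closure_pt K x /\ ~ interior_pt K x.

Definition regular_convex_cone (K : v3 -> Prop) : Prop :=
  closed_set K /\
  (forall u v l, K u -> K v -> 0 <= l <= 1 ->
     K (vadd (vscal l u) (vscal (1 - l) v))) /\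
  (forall u l, K u -> 0 <= l -> K (vscal l u)) /\
  (exists x, interior_pt K x) /\
  (~ exists p d, d <> vzero /\ forall t, K (vadd p (vscal t d))).

Definition proj_eq (u v : v3) : Prop :=
  u <> vzero /\ v <> vzero /\ exists c, c <> 0 /\ u = vscal c v.

Definition in_gamma (K : v3 -> Prop) (v : v3) : Prop :=
  exists w, boundary K w /\ w <> vzero /\ proj_eq v w.

Definition Ck (m : nat) (f : R -> R) : Prop :=
  (forall n, (n <= m)%nat -> forall t, ex_derive_n f n t) /\
  (forall t, continuous (Derive_n f m) t).

Definition cx (y : R -> v3) : R -> R := fun t => vx (y t).
Definition cy (y : R -> v3) : R -> R := fun t => vy (y t).
Definition cz (y : R -> v3) : R -> R := fun t => vz (y t).
Definition Dv (y : R -> v3) (n : nat) (t : R) : v3 :=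
  mkv (Derive_n (cx y) n t) (Derive_n (cy y) n t) (Derive_n (cz y) n t).
Definition diff_upto (m : nat) (y : R -> v3) : Prop :=
  forall n, (n <= m)%nat -> forall t,
    ex_derive_n (cx y) n t /\ ex_derive_n (cy y) n t /\ ex_derive_n (cz y) n t.
Definition Ck_curve (m : nat) (y : R -> v3) : Prop :=
  Ck m (cx y) /\ Ck m (cy y) /\ Ck m (cz y).

(* The boundary minus the origin is a C^k cone surface { r c(t) : r > 0 },
   traced (ray by ray, exactly once per period) by a 2pi-periodic C^k curve c
   with nonvanishing transverse curvature det(c'',c',c) <> 0. *)
Definition Ck_pos_curved_boundary (k : nat) (K : v3 -> Prop) : Prop :=
  exists c : R -> v3,
    Ck_curve k c /\
    (forall t, c (t + 2 * PI) = c t) /\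
    (forall t, boundary K (c t) /\ c t <> vzero) /\
    (forall t, det3 (Dv c 2 t) (Dv c 1 t) (c t) <> 0) /\
    (forall s t, 0 <= s < 2 * PI -> 0 <= t < 2 * PI -> proj_eq (c s) (c t) -> s = t) /\
    (forall v, boundary K v -> v <> vzero ->
       exists t, 0 <= t < 2 * PI /\ proj_eq (c t) v).

Definition hill_solution (alpha : R -> R) (x : R -> R) : Prop :=
  (forall n, (n <= 2)%nat -> forall t, ex_derive_n x n t) /\
  (forall t, Derive_n x 2 t + / 2 * alpha t * x t = 0).

Definition is_monodromy (alpha : R -> R) (a b c d : R) : Prop :=
  exists x1 x2 : R -> R,
    hill_solution alpha x1 /\ hill_solution alpha x2 /\
    (forall l1 l2, (forall t, l1 * x1 t + l2 * x2 t = 0) -> l1 = 0 /\ l2 = 0) /\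
    (forall t, x1 (t + 2 * PI) = a * x1 t + b * x2 t /\
               x2 (t + 2 * PI) = c * x1 t + d * x2 t).

Definition has_eigenvalue_one (a b c d : R) : Prop :=
  exists v1 v2, (v1 <> 0 \/ v2 <> 0) /\ a * v1 + b * v2 = v1 /\ c * v1 + d * v2 = v2.

Definition global_periodic_FL_param (K : v3 -> Prop) : Prop :=
  exists (L : R) (yt : R -> v3) (bt : R -> R),
    0 < L /\
    diff_upto 3 yt /\
    (forall s, yt (s + L) = yt s) /\
    (forall s, in_gamma K (yt s)) /\
    (forall s1 s2, 0 <= s1 < L -> 0 <= s2 < L -> proj_eq (yt s1) (yt s2) -> s1 = s2) /\
    (forall v, in_gamma K v -> exists s, 0 <= s < L /\ proj_eq (yt s) v) /\
    (forall s, det3 (Dv yt 2 s) (Dv yt 1 s) (yt s) = 1) /\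
    (* y''' + 2 a y' + a' y + b y = 0 with a = 0 *)
    (forall s, vadd (Dv yt 3 s) (vscal (bt s) (yt s)) = vzero).

(* Main.v *)
Require Import Defs.
From Stdlib Require Import Reals.
From Coquelicot Require Import Coquelicot.
From Stdlib Require Import ZArith Lra Lia Psatz ClassicalEpsilon Classical.
Open Scope R_scope.

Definition par (u v : v3) := exists c, u = vscal c v.
Definition dot (u v : v3) := vx u * vx v + vy u * vy v + vz u * vz v.
Definition cross (u v : v3) : v3 :=
  mkv (vy u * vz v - vz u * vy v) (vz u * vx v - vx u * vz v) (vx u * vy v - vy u * vx v).
Definition nsq u := dot u u.

Lemma v3_eq : forall u v, vx u = vx v -> vy u = vy v -> vz u = vz v -> u = v.
Proof. intros [[a b] c] [[d e] f]; unfold vx, vy, vz; simpl; intros; subst; auto. Qed.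

Lemma nsq_pos : forall u, u <> vzero -> 0 < nsq u.
Proof.
  intros [[a b] c] H. unfold nsq, dot, vx, vy, vz; simpl.
  destruct (Req_dec a 0), (Req_dec b 0), (Req_dec c 0); subst;
    try (elim H; reflexivity); nra.
Qed.

Lemma det_nz3 : forall a b c, det3 a b c = 1 -> c <> vzero.
Proof. intros a b c H E; subst; unfold det3, vzero, mkv, vx, vy, vz in H; simpl in H; lra. Qed.

Lemma cross_zero_par : forall u v, v <> vzero -> nsq (cross u v) = 0 ->
  u = vscal (dot u v / nsq v) v.
Proof.
  intros u v Hv H. pose proof (nsq_pos v Hv) as P.
  destruct u as [[a b] c]; destruct v as [[d e] f].
  unfold nsq, cross, dot, vscal, mkv, vx, vy, vz in *; simpl in *.
  clear Hv.
  pose proof (Rle_0_sqr (b * f - c * e)); pose proof (Rle_0_sqr (c * d - a * f));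
  pose proof (Rle_0_sqr (a * e - b * d)); unfold Rsqr in *.
  assert (h1 : (b * f - c * e) * (b * f - c * e) = 0) by lra.
  assert (h2 : (c * d - a * f) * (c * d - a * f) = 0) by lra.
  assert (h3 : (a * e - b * d) * (a * e - b * d) = 0) by lra.
  apply Rmult_integral in h1; apply Rmult_integral in h2; apply Rmult_integral in h3.
  assert (k1 : b * f - c * e = 0) by tauto.
  assert (k2 : c * d - a * f = 0) by tauto.
  assert (k3 : a * e - b * d = 0) by tauto.
  f_equal; [f_equal|]; field_simplify_eq; try lra.
  all: nra.
Qed.

Lemma vscal_ne : forall c v, v <> vzero -> vscal c v <> vzero -> c <> 0.
Proof. intros c v _ H E; subst; apply H; unfold vscal, vzero, mkv; repeat f_equal; ring. Qed.

Lemma vscal_inj : forall c c' v, v <> vzero -> vscal c v = vscal c' v -> c = c'.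
Proof.
  intros c c' [[a b] d] Hv E. unfold vscal, mkv, vx, vy, vz in E; simpl in E.
  injection E; intros e3 e2 e1.
  destruct (Req_dec (c - c') 0) as [h|h]; [lra|].
  exfalso; apply Hv.
  assert (a = 0). { apply (Rmult_eq_reg_l (c - c')); [lra|auto]. }
  assert (b = 0). { apply (Rmult_eq_reg_l (c - c')); [lra|auto]. }
  assert (d = 0). { apply (Rmult_eq_reg_l (c - c')); [lra|auto]. }
  subst; reflexivity.
Qed.

Section Glob.
Variables (Y y : R -> v3) (L : R).
Hypothesis HL : 0 < L.
Hypothesis HYper : forall s, Y (s + L) = Y s.
Hypothesis HYinj : forall s1 s2, 0 <= s1 < L -> 0 <= s2 < L -> proj_eq (Y s1) (Y s2) -> s1 = s2.
Hypothesis HY0 : forall s, Y s <> vzero.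
Hypothesis Hy0 : forall t, y t <> vzero.

Lemma per_nat : forall n s, Y (s + INR n * L) = Y s.
Proof.
  induction n; intros s. simpl; rewrite Rmult_0_l, Rplus_0_r; auto.
  rewrite S_INR. replace (s + (INR n + 1) * L) with ((s + INR n * L) + L) by ring.
  rewrite HYper; auto.
Qed.

Lemma per_Z : forall n s, Y (s + IZR n * L) = Y s.
Proof.
  intros n s. destruct n as [|p|p].
  - simpl; f_equal; ring.
  - rewrite <- positive_nat_Z, <- INR_IZR_INZ; apply per_nat.
  - rewrite <- (per_nat (Pos.to_nat p) (s + IZR (Z.neg p) * L)).
    f_equal. rewrite INR_IZR_INZ, positive_nat_Z, <- Pos2Z.opp_pos, opp_IZR. ring.
Qed.

Lemma reduce : forall s, exists n, 0 <= s - IZR n * L < L.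
Proof.
  intros s. destruct (archimed (s / L)) as [h1 h2].
  exists (up (s / L) - 1)%Z. rewrite minus_IZR.
  assert (s = (s / L) * L) by (field; lra).
  split; [|]; nra.
Qed.

Lemma uniq_core : forall s s' c c' t, Y s = vscal c (y t) -> Y s' = vscal c' (y t) ->
  exists n, s - s' = IZR n * L.
Proof.
  intros s s' c c' t E E'.
  destruct (reduce s) as [n Hn]; destruct (reduce s') as [n' Hn'].
  assert (Hc' : c' <> 0). { apply (vscal_ne c' (y t)); auto; rewrite <- E'; auto. }
  assert (Hc : c <> 0). { apply (vscal_ne c (y t)); auto; rewrite <- E; auto. }
  assert (R1 : s - IZR n * L = s' - IZR n' * L).
  { apply HYinj; auto. split; [|split]; try apply HY0.
    exists (c / c'). replace (s - IZR n * L) with (s + IZR (- n) * L) by (rewrite opp_IZR; ring).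
    replace (s' - IZR n' * L) with (s' + IZR (- n') * L) by (rewrite opp_IZR; ring).
    rewrite !per_Z, E, E'. unfold vscal, mkv, vx, vy, vz; simpl. split.
    { unfold Rdiv; apply Rmult_integral_contrapositive; split; auto; apply Rinv_neq_0_compat; auto. }
    f_equal; [f_equal|]; field; auto. }
  exists (n - n')%Z. rewrite minus_IZR. lra.
Qed.

Lemma uniq_s : forall s s' t, par (Y s) (y t) -> par (Y s') (y t) -> Rabs (s - s') < L -> s = s'.
Proof.
  intros s s' t [c E] [c' E'] H.
  destruct (uniq_core s s' c c' t E E') as [n Hn]. rewrite Hn in H.
  rewrite Rabs_mult, (Rabs_pos_eq L) in H by lra.
  assert (Rabs (IZR n) < 1). { apply (Rmult_lt_reg_r L); lra. }
  rewrite <- abs_IZR in H0. apply lt_IZR in H0.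
  assert (n = 0%Z) by lia. subst. simpl in Hn. lra.
Qed.

Lemma lam_unique : forall s s' c c' t, Y s = vscal c (y t) -> Y s' = vscal c' (y t) -> c = c'.
Proof.
  intros s s' c c' t E E'.
  destruct (uniq_core s s' c c' t E E') as [n Hn].
  apply (vscal_inj c c' (y t)); auto.
  rewrite <- E, <- E'. replace s with (s' + IZR n * L) by lra. apply per_Z.
Qed.

Definition vof (Y : R -> v3) s := mkv (cx Y s) (cy Y s) (cz Y s).
Lemma vof_eq : forall (Z : R -> v3) s, vof Z s = Z s.
Proof. intros Z s; unfold vof, cx, cy, cz; apply v3_eq; reflexivity. Qed.

Hypothesis HYd : forall s, ex_derive (cx Y) s /\ ex_derive (cy Y) s /\ ex_derive (cz Y) s.
Hypothesis Hyd : forall s, ex_derive (cx y) s /\ ex_derive (cy y) s /\ ex_derive (cz y) s.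
Hypothesis HYsurj : forall t, exists s c, Y s = vscal c (y t).

Lemma cont_ratio : forall (Z : R -> v3) w x,
  (ex_derive (cx Z) x /\ ex_derive (cy Z) x /\ ex_derive (cz Z) x) -> Z x <> vzero ->
  continuity_pt (fun s => nsq (cross (vof Z s) w) / nsq (vof Z s)) x.
Proof.
  intros Z w x [d1 [d2 d3]] Hz. apply continuity_pt_filterlim.
  match goal with |- filterlim ?f _ _ => cut (ex_derive f x) end.
  { intro H; apply ex_derive_continuous in H; exact H. }
  pose proof (nsq_pos _ Hz) as P. rewrite <- (vof_eq Z x) in P.
  revert P. cbv [nsq cross dot mkv vx vy vz fst snd vof]. intro P.
  auto_derive. repeat split; auto. lra.
Qed.

Lemma nsq_cross_scal : forall c u w, c <> 0 ->
  nsq (cross (vscal c u) w) / nsq (vscal c u) = nsq (cross u w) / nsq u.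
Proof.
  intros c [[a b] d] [[e f] g] Hc. cbv [nsq cross dot mkv vx vy vz fst snd vscal].
  destruct (Req_dec (a * a + b * b + d * d) 0) as [h|h].
  - replace (c * a * (c * a) + c * b * (c * b) + c * d * (c * d)) with (c * c * (a * a + b * b + d * d)) by ring.
    rewrite h. rewrite Rmult_0_r. unfold Rdiv; rewrite !Rinv_0; ring.
  - field. split; auto.
    replace (c * a * (c * a) + c * b * (c * b) + c * d * (c * d)) with (c * c * (a * a + b * b + d * d)) by ring.
    apply Rmult_integral_contrapositive; split; auto; apply Rmult_integral_contrapositive; auto.
Qed.

Lemma LocEx : forall t1 s1 c1, Y s1 = vscal c1 (y t1) -> forall eps, 0 < eps < L / 2 ->
  exists del, 0 < del /\ forall t, Rabs (t - t1) < del ->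
    exists s, Rabs (s - s1) < eps /\ par (Y s) (y t).
Proof.
  intros t1 s1 c1 E1 eps Heps.
  set (y1 := y t1).
  set (D := fun s => nsq (cross (vof Y s) y1) / nsq (vof Y s)).
  destruct (continuity_ab_min D (s1 + eps) (s1 + L - eps)) as [mx [Hmx1 Hmx2]].
  { lra. }
  { intros; apply cont_ratio; auto. }
  assert (Hm : 0 < D mx).
  { unfold D. rewrite !vof_eq. apply Rdiv_lt_0_compat; [|apply nsq_pos; auto].
    destruct (Rle_lt_or_eq_dec 0 (nsq (cross (Y mx) y1))) as [h|h]; auto.
    { unfold nsq, dot; nra. }
    exfalso. symmetry in h. apply cross_zero_par in h; [|apply Hy0].
    assert (mx = s1).
    { apply (uniq_s mx s1 t1). eexists; exact h. eexists; exact E1.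
      rewrite Rabs_lt_between; lra. }
    lra. }
  set (Et := fun t => nsq (cross (vof y t) y1) / nsq (vof y t)).
  assert (Ec : continuity_pt Et t1) by (apply cont_ratio; auto).
  rewrite continuity_pt_locally in Ec.
  destruct (Ec (mkposreal _ Hm)) as [del Hdel].
  exists del; split; [apply cond_pos|].
  intros t Ht.
  assert (HE : Et t < D mx).
  { specialize (Hdel t Ht). simpl in Hdel.
    assert (Et t1 = 0).
    { unfold Et, y1. rewrite vof_eq. cbv [nsq cross dot mkv vx vy vz fst snd]. 
      unfold Rdiv. ring_simplify. reflexivity. }
    rewrite H in Hdel. rewrite Rminus_0_r in Hdel. 
    apply Rabs_lt_between in Hdel; lra. }
  destruct (HYsurj t) as [s' [c E]].
  destruct (reduce (s' - s1)) as [n Hn].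
  set (s := s' - IZR n * L).
  assert (Es : Y s = vscal c (y t)).
  { unfold s. replace (s' - IZR n * L) with (s' + IZR (- n) * L) by (rewrite opp_IZR; ring).
    rewrite per_Z; auto. }
  assert (Hc : c <> 0). { apply (vscal_ne c (y t)); auto; rewrite <- Es; auto. }
  destruct (Rlt_le_dec (s - s1) eps) as [h1|h1].
  { exists s; split. rewrite Rabs_lt_between; unfold s in *; lra. eexists; exact Es. }
  destruct (Rlt_le_dec (L - eps) (s - s1)) as [h2|h2].
  { exists (s - L); split. rewrite Rabs_lt_between; unfold s in *; lra.
    exists c. rewrite <- Es. rewrite <- (HYper (s - L)). f_equal; ring. }
  exfalso.
  assert (D s <= Et t).
  { unfold D, Et. rewrite !vof_eq. rewrite Es. rewrite nsq_cross_scal; auto. lra. }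
  specialize (Hmx1 s). assert (D mx <= D s) by (apply Hmx1; unfold s in *; lra). lra.
Qed.

Definition lam t := epsilon (inhabits 0) (fun c => exists s, Y s = vscal c (y t)).
Lemma lam_spec : forall t, exists s, Y s = vscal (lam t) (y t).
Proof.
  intro t. unfold lam. apply epsilon_spec. destruct (HYsurj t) as [s [c E]]. exists c, s; auto.
Qed.

Lemma local_sigma : forall t0, exists (sig : R -> R) del, 0 < del /\
  (forall t, Rabs (t - t0) < del -> Y (sig t) = vscal (lam t) (y t)) /\
  (forall t, Rabs (t - t0) < del -> forall eps, 0 < eps -> exists eta, 0 < eta /\
     forall t', Rabs (t' - t) < eta -> Rabs (sig t' - sig t) < eps).
Proof.
  intro t0. destruct (HYsurj t0) as [s0 [c0 E0]].
  set (P := fun t s => Rabs (s - s0) < L / 4 /\ par (Y s) (y t)).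
  set (sig := fun t => epsilon (inhabits 0) (P t)).
  destruct (LocEx t0 s0 c0 E0 (L / 4)) as [del0 [Hdel0 H0]]. lra.
  assert (Hs : forall t, Rabs (t - t0) < del0 -> P t (sig t)).
  { intros t Ht. unfold sig. apply epsilon_spec. apply H0; auto. }
  exists sig, del0; split; auto; split.
  - intros t Ht. destruct (Hs t Ht) as [_ [c Ec]].
    destruct (lam_spec t) as [s' Es'].
    rewrite Ec. f_equal. apply (lam_unique (sig t) s' c (lam t) t); auto.
  - intros t Ht eps Heps.
    destruct (Hs t Ht) as [Hst [c Ec]].
    set (e' := Rmin eps (Rmin (L / 4) (L / 4 - Rabs (sig t - s0)))).
    assert (He'1 : e' <= eps) by apply Rmin_l.
    assert (He'2 : e' <= L / 4) by (eapply Rle_trans; [apply Rmin_r|apply Rmin_l]).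
    assert (He'3 : e' <= L / 4 - Rabs (sig t - s0)) by (eapply Rle_trans; [apply Rmin_r|apply Rmin_r]).
    assert (He'0 : 0 < e').
    { unfold e'. apply Rmin_pos; auto. apply Rmin_pos; lra. }
    destruct (LocEx t (sig t) c Ec e') as [eta1 [Heta1 H1]]. lra.
    exists (Rmin eta1 (del0 - Rabs (t - t0))). split.
    { apply Rmin_pos; lra. }
    intros t' Ht'.
    assert (Ht'1 : Rabs (t' - t) < eta1) by (eapply Rlt_le_trans; [exact Ht'|apply Rmin_l]).
    assert (Ht'2 : Rabs (t' - t) < del0 - Rabs (t - t0)) by (eapply Rlt_le_trans; [exact Ht'|apply Rmin_r]).
    destruct (H1 t' Ht'1) as [s [Hs1 Hs2]].
    assert (Ht0 : Rabs (t' - t0) < del0).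
    { replace (t' - t0) with ((t' - t) + (t - t0)) by ring.
      eapply Rle_lt_trans; [apply Rabs_triang|]. lra. }
    destruct (Hs t' Ht0) as [Hst' Hp'].
    assert (Hss0 : Rabs (s - s0) < L / 4).
    { replace (s - s0) with ((s - sig t) + (sig t - s0)) by ring.
      eapply Rle_lt_trans; [apply Rabs_triang|]. lra. }
    assert (s = sig t').
    { apply (uniq_s s (sig t') t'); auto.
      replace (s - sig t') with ((s - s0) - (sig t' - s0)) by ring.
      eapply Rle_lt_trans; [apply Rabs_triang|]. rewrite Rabs_Ropp. lra. }
    rewrite <- H. lra.
Qed.
End Glob.

Lemma quot_bound : forall q G r F e1 e2, G <> 0 -> Rabs (q - G) <= Rabs G / 2 ->
  Rabs (q - G) <= e1 -> Rabs (r - F) <= e2 ->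
  Rabs (r / q - F / G) <= 2 * (e2 * Rabs G + Rabs F * e1) / (Rabs G * Rabs G).
Proof.
  intros q G r F e1 e2 HG H1 H2 H3.
  assert (Hq : Rabs G / 2 <= Rabs q).
  { pose proof (Rabs_triang_inv G (G - q)). replace (G - (G - q)) with q in H by ring.
    rewrite <- Rabs_Ropp in H1. replace (- (q - G)) with (G - q) in H1 by ring. lra. }
  assert (HG' : 0 < Rabs G) by (apply Rabs_pos_lt; auto).
  assert (Hq0 : q <> 0). { intro; subst; rewrite Rabs_R0 in Hq; lra. }
  replace (r / q - F / G) with (((r - F) * G - F * (q - G)) / (q * G)) by (field; auto).
  unfold Rdiv. rewrite Rabs_mult, Rabs_inv, Rabs_mult.
  assert (N : Rabs ((r - F) * G - F * (q - G)) <= e2 * Rabs G + Rabs F * e1).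
  { eapply Rle_trans; [apply Rabs_triang|]. rewrite Rabs_Ropp, !Rabs_mult.
    apply Rplus_le_compat; [apply Rmult_le_compat_r|apply Rmult_le_compat_l]; auto;
      apply Rabs_pos. }
  assert (0 <= e2 * Rabs G + Rabs F * e1).
  { eapply Rle_trans; [apply Rabs_pos|exact N]. }
  apply Rle_trans with ((e2 * Rabs G + Rabs F * e1) * / (Rabs q * Rabs G)).
  { apply Rmult_le_compat_r; auto. apply Rlt_le, Rinv_0_lt_compat; nra. }
  replace (2 * (e2 * Rabs G + Rabs F * e1) * / (Rabs G * Rabs G)) with
    ((e2 * Rabs G + Rabs F * e1) * / (Rabs G / 2 * Rabs G)) by (field; lra).
  apply Rmult_le_compat_l; auto. apply Rinv_le_contravar; nra.
Qed.

Lemma inv_deriv : forall (sig f g : R -> R) t1 del1 G,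
  0 < del1 -> (forall t, Rabs (t - t1) < del1 -> g (sig t) = f t) ->
  (forall eps, 0 < eps -> exists eta, 0 < eta /\ forall t', Rabs (t' - t1) < eta -> Rabs (sig t' - sig t1) < eps) ->
  is_derive g (sig t1) G -> G <> 0 -> ex_derive f t1 -> ex_derive sig t1.
Proof.
  intros sig f g t1 del1 G Hdel Hrel Hc Hg HG [F Hf].
  exists (F / G). apply is_derive_Reals. apply is_derive_Reals in Hg. apply is_derive_Reals in Hf.
  intros eps Heps.
  assert (HG' : 0 < Rabs G) by (apply Rabs_pos_lt; auto).
  set (e1 := Rmin (Rabs G / 2) (eps * (Rabs G * Rabs G) / (4 * (Rabs F + 1)))).
  assert (He1 : 0 < e1).
  { unfold e1; apply Rmin_pos. lra. apply Rdiv_lt_0_compat. apply Rmult_lt_0_compat; [lra|apply Rmult_lt_0_compat; lra]. pose proof (Rabs_pos F); lra. }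
  set (e2 := eps * Rabs G / 4).
  assert (He2 : 0 < e2) by (unfold e2; nra).
  destruct (Hg e1 He1) as [rho Hrho].
  destruct (Hf e2 He2) as [df Hdf].
  destruct (Hc rho (cond_pos rho)) as [eta [Heta Hsig]].
  assert (Hd : 0 < Rmin eta (Rmin df del1)).
  { apply Rmin_pos; auto. apply Rmin_pos; auto. apply cond_pos. }
  exists (mkposreal _ Hd). intros h Hh0 Hh. simpl in Hh.
  assert (hh1 : Rabs h < eta) by (eapply Rlt_le_trans; [exact Hh|apply Rmin_l]).
  assert (hh2 : Rabs h < df) by (eapply Rlt_le_trans; [exact Hh|eapply Rle_trans; [apply Rmin_r|apply Rmin_l]]).
  assert (hh3 : Rabs h < del1) by (eapply Rlt_le_trans; [exact Hh|eapply Rle_trans; [apply Rmin_r|apply Rmin_r]]).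
  specialize (Hdf h Hh0 hh2).
  assert (Hr : g (sig (t1 + h)) - g (sig t1) = f (t1 + h) - f t1).
  { assert (a1 : Rabs (t1 + h - t1) < del1) by (replace (t1 + h - t1) with h by ring; auto).
    assert (a2 : Rabs (t1 - t1) < del1) by (rewrite Rminus_diag, Rabs_R0; auto).
    rewrite (Hrel _ a1), (Hrel _ a2). reflexivity. }
  set (k := sig (t1 + h) - sig t1).
  assert (Hk : Rabs k < rho).
  { unfold k; apply Hsig. replace (t1 + h - t1) with h by ring; auto. }
  assert (Hsum : True /\ 2 * (e2 * Rabs G + Rabs F * e1) / (Rabs G * Rabs G) < eps).
  { split. exact I.
    - assert (Rabs F * e1 <= Rabs F * (eps * (Rabs G * Rabs G) / (4 * (Rabs F + 1)))) by
        (apply Rmult_le_compat_l; [apply Rabs_pos|apply Rmin_r]).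
      assert (Rabs F * (eps * (Rabs G * Rabs G) / (4 * (Rabs F + 1))) < eps * (Rabs G * Rabs G) / 4).
      { pose proof (Rabs_pos F). 
        apply Rmult_lt_reg_r with (4 * (Rabs F + 1)); [lra|].
        field_simplify; [|lra]. assert (0 < eps * Rabs G ^ 2) by (apply Rmult_lt_0_compat; [lra| apply pow_lt; lra]). nra. }
      apply Rmult_lt_reg_r with (Rabs G * Rabs G); [nra|].
      field_simplify; [|lra]. unfold e2. nra. }
  destruct (Req_dec k 0) as [k0|k0].
  - assert (Hf0 : f (t1 + h) - f t1 = 0).
    { rewrite <- Hr. unfold k in k0. replace (sig (t1 + h)) with (sig t1) by lra. ring. }
    rewrite Hf0 in Hdf. rewrite k0.
    unfold Rdiv at 1. rewrite Rmult_0_l, Rminus_0_l, Rabs_Ropp.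
    unfold Rdiv in Hdf; rewrite Rmult_0_l, Rminus_0_l, Rabs_Ropp in Hdf.
    rewrite Rabs_div by auto.
    apply Rmult_lt_reg_r with (Rabs G); [lra|]. unfold Rdiv. rewrite Rmult_assoc, Rinv_l by lra.
    unfold e2 in Hdf. nra.
  - specialize (Hrho k k0 Hk).
    replace (sig t1 + k) with (sig (t1 + h)) in Hrho by (unfold k; ring).
    rewrite Hr in Hrho.
    set (q := (f (t1 + h) - f t1) / k) in *.
    set (r := (f (t1 + h) - f t1) / h) in *.
    assert (E : k / h = r / q).
    { unfold r, q. fold k. destruct (Req_dec (f (t1 + h) - f t1) 0) as [z|z].
      - exfalso. unfold q in Hrho. rewrite z in Hrho. unfold Rdiv in Hrho.
        rewrite Rmult_0_l, Rminus_0_l, Rabs_Ropp in Hrho.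
        assert (e1 <= Rabs G / 2) by apply Rmin_l. lra.
      - field. auto. }
    rewrite E. destruct Hsum as [S1 S2].
    eapply Rle_lt_trans; [|exact S2].
    apply quot_bound; auto; try lra.
    assert (e1 <= Rabs G / 2) by apply Rmin_l. lra.
Qed.

Ltac etafold := repeat match goal with |- context [fun x : R => ?f x] => change (fun x : R => f x) with f end.

Lemma ball_loc : forall t0 del t, Rabs (t - t0) < del -> locally t (fun u => Rabs (u - t0) < del).
Proof.
  intros t0 del t H. assert (P : 0 < del - Rabs (t - t0)) by lra.
  exists (mkposreal _ P). intros u Hu. change (Rabs (u - t) < del - Rabs (t - t0)) in Hu.
  replace (u - t0) with ((u - t) + (t - t0)) by ring.
  eapply Rle_lt_trans; [apply Rabs_triang|]. simpl in Hu. lra.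
Qed.

Lemma G_E1 : forall (Yc yc s l : R -> R) t,
  locally t (fun u => Yc (s u) = l u * yc u) ->
  ex_derive Yc (s t) -> ex_derive s t -> ex_derive l t -> ex_derive yc t ->
  Derive Yc (s t) * Derive s t = Derive l t * yc t + l t * Derive yc t.
Proof.
  intros Yc yc s l t H d1 d2 d3 d4.
  assert (A : is_derive (fun u => Yc (s u)) t (Derive Yc (s t) * Derive s t)).
  { auto_derive; [repeat split; auto|etafold; ring]. }
  assert (B : is_derive (fun u => l u * yc u) t (Derive l t * yc t + l t * Derive yc t)).
  { auto_derive; [repeat split; auto|etafold; ring]. }
  apply (is_derive_ext_loc _ _ _ _ H) in A.
  pose proof (is_derive_unique _ _ _ A) as U. pose proof (is_derive_unique _ _ _ B) as V.
  rewrite <- U. exact V.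
Qed.

Lemma G_E2 : forall (Yc yc s l : R -> R) t,
  locally t (fun u => Derive Yc (s u) * Derive s u = Derive l u * yc u + l u * Derive yc u) ->
  ex_derive (Derive Yc) (s t) -> ex_derive s t -> ex_derive (Derive s) t ->
  ex_derive l t -> ex_derive (Derive l) t -> ex_derive yc t -> ex_derive (Derive yc) t ->
  Derive (Derive Yc) (s t) * Derive s t * Derive s t + Derive Yc (s t) * Derive (Derive s) t
  = Derive (Derive l) t * yc t + 2 * Derive l t * Derive yc t + l t * Derive (Derive yc) t.
Proof.
  intros Yc yc s l t H d1 d2 d3 d4 d5 d6 d7.
  assert (d8 : ex_derive yc t).
  { auto. }
  assert (A : is_derive (fun u => Derive Yc (s u) * Derive s u) t
     (Derive (Derive Yc) (s t) * Derive s t * Derive s t + Derive Yc (s t) * Derive (Derive s) t)).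
  { auto_derive; [repeat split; auto|etafold; ring]. }
  assert (B : is_derive (fun u => Derive l u * yc u + l u * Derive yc u) t
     (Derive (Derive l) t * yc t + 2 * Derive l t * Derive yc t + l t * Derive (Derive yc) t)).
  { auto_derive; [repeat split; auto|etafold; ring]. }
  apply (is_derive_ext_loc _ _ _ _ H) in A.
  pose proof (is_derive_unique _ _ _ A) as U. pose proof (is_derive_unique _ _ _ B) as V.
  rewrite <- U. exact V.
Qed.

Lemma G_Q : forall (A s l l1 d1 d2 : R -> R) t, ex_derive A (s t) -> ex_derive s t -> ex_derive l t ->
 ex_derive l1 t -> ex_derive d1 t -> ex_derive d2 t -> l t <> 0 ->
 is_derive (fun u => A (s u) * l u - l1 u / l u * d1 u - d2 u) t
  (Derive A (s t) * Derive s t * l t + A (s t) * Derive l t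
   - ((Derive l1 t * l t - l1 t * Derive l t)/(l t * l t)) * d1 t - l1 t / l t * Derive d1 t - Derive d2 t).
Proof.
  intros. auto_derive. repeat split; auto. etafold. field. auto.
Qed.

Lemma cube_eq : forall S l, l <> 0 -> S ^ 3 = l ^ 3 -> S = l.
Proof.
  intros S l Hl H.
  assert ((S - l) * ((S + l / 2) ^ 2 + 3 / 4 * l ^ 2) = 0) by (rewrite <- (Rminus_diag (l^3)) ; rewrite <- H at 1; field).
  apply Rmult_integral in H0. destruct H0; [lra|].
  exfalso. assert (0 < l ^ 2) by (apply pow2_gt_0 ; auto). 
  assert (0 <= (S + l / 2) ^ 2) by apply pow2_ge_0. lra.
Qed.

Lemma deriv_ratio : forall (Z : R -> v3) a b s,
  (ex_derive (cx Z) s /\ ex_derive (cy Z) s /\ ex_derive (cz Z) s) -> dot (Z s) b <> 0 ->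
  is_derive (fun u => dot (vof Z u) a / dot (vof Z u) b) s
   ((dot (Dv Z 1 s) a * dot (Z s) b - dot (Z s) a * dot (Dv Z 1 s) b) / (dot (Z s) b * dot (Z s) b)).
Proof.
  intros Z [[a1 a2] a3] [[b1 b2] b3] s [d1 [d2 d3]] H.
  rewrite <- (vof_eq Z s) in *. revert H.
  cbv [dot vof mkv vx vy vz fst snd Dv Derive_n]. intro H.
  auto_derive; [repeat split; auto|]. etafold. field. auto.
Qed.

Lemma Gexpr_nz : forall p q r, det3 r q p = 1 ->
  let a := vadd q (vscal (- (dot q p / nsq p)) p) in
  (dot q a * dot p p - dot p a * dot q p) / (dot p p * dot p p) <> 0.
Proof.
  intros p q r H a.
  assert (Hp : p <> vzero) by (eapply det_nz3; eauto).
  assert (Hc : cross q p <> vzero).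
  { intro E. revert H. destruct r as [[r1 r2] r3]; destruct q as [[q1 q2] q3]; destruct p as [[p1 p2] p3].
    unfold cross, mkv, vzero in E; cbv [vx vy vz fst snd] in E. injection E; intros e1 e2 e3.
    unfold det3; cbv [vx vy vz fst snd]. intro H'.
    assert (X : r1 * (q2 * p3 - q3 * p2) - q1 * (r2 * p3 - r3 * p2) + p1 * (r2 * q3 - r3 * q2) = 0).
    { replace (r1 * (q2 * p3 - q3 * p2) - q1 * (r2 * p3 - r3 * p2) + p1 * (r2 * q3 - r3 * q2)) with
      (r1 * (q2 * p3 - q3 * p2) + r2 * (q3 * p1 - q1 * p3) + r3 * (q1 * p2 - q2 * p1)) by ring.
      rewrite e1, e2, e3. ring. }
    lra. }
  pose proof (nsq_pos _ Hp) as P1. pose proof (nsq_pos _ Hc) as P2.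
  replace ((dot q a * dot p p - dot p a * dot q p) / (dot p p * dot p p)) with
    (nsq (cross q p) / (nsq p * nsq p)).
  { apply Rgt_not_eq, Rdiv_lt_0_compat; nra. }
  unfold a. revert P1 P2. destruct q as [[q1 q2] q3]; destruct p as [[p1 p2] p3].
  cbv [nsq dot cross vadd vscal mkv vx vy vz fst snd]. intros. field. lra.
Qed.

Lemma ball_in : forall t0 del t t', Rabs (t' - t) < del - Rabs (t - t0) -> Rabs (t' - t0) < del.
Proof.
  intros t0 del t t' H. replace (t' - t0) with ((t' - t) + (t - t0)) by ring.
  eapply Rle_lt_trans; [apply Rabs_triang|]. lra.
Qed.

Lemma dot_scal : forall c u w, dot (vscal c u) w = c * dot u w.
Proof. intros c [[a b] d] [[e f] g]. cbv [dot vscal mkv vx vy vz fst snd]. ring. Qed.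
Lemma ratio_scal : forall c x z, c <> 0 -> (c * x) / (c * z) = x / z.
Proof. intros c x z H. unfold Rdiv. rewrite Rinv_mult. destruct (Req_dec z 0). subst; rewrite Rinv_0; ring. field. auto. Qed.

Lemma alg_S1 : forall (B yv dv : v3) S L1 l, vscal S B = vadd (vscal L1 yv) (vscal l dv) ->
  S * nsq (cross B yv) = l * dot (cross dv yv) (cross B yv).
Proof.
  intros [[b1 b2] b3] [[y1 y2] y3] [[d1 d2] d3] S L1 l E.
  cbv [vscal vadd mkv vx vy vz fst snd] in E. injection E; intros e3 e2 e1.
  cbv [nsq dot cross mkv vx vy vz fst snd].
  replace (S * ((b2 * y3 - b3 * y2) * (b2 * y3 - b3 * y2) + (b3 * y1 - b1 * y3) * (b3 * y1 - b1 * y3) +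
     (b1 * y2 - b2 * y1) * (b1 * y2 - b2 * y1))) with
   (((S * b2) * y3 - (S * b3) * y2) * (b2 * y3 - b3 * y2) + ((S * b3) * y1 - (S * b1) * y3) * (b3 * y1 - b1 * y3) +
     ((S * b1) * y2 - (S * b2) * y1) * (b1 * y2 - b2 * y1)) by ring.
  rewrite e1, e2, e3. ring.
Qed.

Lemma alg_L1 : forall (B yv dv : v3) S L1 l, vscal S B = vadd (vscal L1 yv) (vscal l dv) ->
  S * dot B yv = L1 * nsq yv + l * dot dv yv.
Proof.
  intros [[b1 b2] b3] [[y1 y2] y3] [[d1 d2] d3] S L1 l E.
  cbv [vscal vadd mkv vx vy vz fst snd] in E. injection E; intros e3 e2 e1.
  cbv [nsq dot cross mkv vx vy vz fst snd].
  replace (S * (b1 * y1 + b2 * y2 + b3 * y3)) with ((S * b1) * y1 + (S * b2) * y2 + (S * b3) * y3) by ring.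
  rewrite e1, e2, e3. ring.
Qed.

Lemma det_scal3 : forall r q c w, det3 r q (vscal c w) = c * dot r (cross q w).
Proof. intros [[a b] d] [[e f] g] c [[h i] j]. cbv [det3 dot cross vscal mkv vx vy vz fst snd]. ring. Qed.

Lemma alg_det : forall (A B P a b p : v3) S S2 l L1 L2, det3 A B P = 1 -> det3 a b p = 1 ->
  P = vscal l p -> vscal S B = vadd (vscal L1 p) (vscal l b) ->
  vadd (vscal (S * S) A) (vscal S2 B) = vadd (vadd (vscal L2 p) (vscal (2 * L1) b)) (vscal l a) ->
  S ^ 3 = l ^ 3.
Proof.
  intros A B P a b p S S2 l L1 L2 HA Ha EP E1 E2.
  assert (X : S ^ 3 = det3 (vadd (vscal (S * S) A) (vscal S2 B)) (vscal S B) P).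
  { rewrite <- (Rmult_1_r (S ^ 3)), <- HA. destruct A as [[? ?] ?]; destruct B as [[? ?] ?]; destruct P as [[? ?] ?].
    cbv [det3 vscal vadd mkv vx vy vz fst snd]. ring. }
  rewrite X, E2, E1, EP. rewrite <- (Rmult_1_r (l ^ 3)), <- Ha.
  destruct a as [[? ?] ?]; destruct b as [[? ?] ?]; destruct p as [[? ?] ?].
  cbv [det3 vscal vadd mkv vx vy vz fst snd]. ring.
Qed.

Lemma alg_Q : forall A B p b a S S2 l L1 L2, B * S = L1 * p + l * b ->
  A * S * S + B * S2 = L2 * p + 2 * L1 * b + l * a -> S = l -> S2 = L1 -> l <> 0 ->
  A * l - L1 / l * b - a = (L2 / l - (L1 / l) ^ 2) * p.
Proof.
  intros A B p b a S S2 l L1 L2 H1 H2 e1 e2 Hl. subst S S2.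
  apply Rmult_eq_reg_r with (l * l); [|apply Rmult_integral_contrapositive; auto].
  replace ((A * l - L1 / l * b - a) * (l * l)) with (l * (A * l * l + B * L1) - L1 * (B * l) - L1 * l * b - a * l * l)
    by (field; auto).
  rewrite H1, H2. field. auto.
Qed.

Lemma alg_final : forall a3 A S l L1 L2 y0 y1 y2 y3 M1 M1' b al be dal,
  a3 = - b * (l * y0) -> S = l -> A * l - L1 / l * y1 - y2 = M1 * y0 ->
  M1 = L2 / l - (L1 / l) ^ 2 -> y3 = - (2 * al * y1) - (dal + be) * y0 -> l <> 0 ->
  a3 * S * l + A * L1 - ((L2 * l - L1 * L1) / (l * l)) * y1 - L1 / l * y2 - y3 = M1' * y0 + M1 * y1 ->
  (- b * l ^ 3 + L1 / l * M1 + dal + be - M1') * y0 + ((L1 / l) ^ 2 - 2 * M1 + 2 * al) * y1 = 0.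
Proof.
  intros a3 A S l L1 L2 y0 y1 y2 y3 M1 M1' b al be dal e1 e2 e3 e4 e5 Hl H.
  assert (eA : A = (M1 * y0 + L1 / l * y1 + y2) / l) by (rewrite <- e3; field; auto).
  assert (eL2 : L2 = (M1 + (L1 / l) ^ 2) * l) by (rewrite e4; field; auto).
  subst a3 S y3. rewrite eA, eL2 in H.
  transitivity (- b * (l * y0) * l * l + (M1 * y0 + L1 / l * y1 + y2) / l * L1 -
      ((M1 + (L1 / l) ^ 2) * l * l - L1 * L1) / (l * l) * y1 - L1 / l * y2 -
      (- (2 * al * y1) - (dal + be) * y0) - (M1' * y0 + M1 * y1)).
  - field. auto.
  - rewrite H. ring.
Qed.

Lemma alg_extract : forall c0 B (a b p : v3), det3 a b p = 1 ->
  c0 * vx p + B * vx b = 0 -> c0 * vy p + B * vy b = 0 -> c0 * vz p + B * vz b = 0 -> B = 0.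
Proof.
  intros c0 B [[a1 a2] a3] [[b1 b2] b3] [[p1 p2] p3] H e1 e2 e3.
  cbv [det3 vx vy vz fst snd] in *.
  rewrite <- (Rmult_1_r B), <- H.
  replace (B * (a1 * (b2 * p3 - b3 * p2) - b1 * (a2 * p3 - a3 * p2) + p1 * (a2 * b3 - a3 * b2))) with
   (a1 * ((c0 * p2 + B * b2) * p3 - (c0 * p3 + B * b3) * p2) - (c0 * p1 + B * b1) * (a2 * p3 - a3 * p2)
    + p1 * (a2 * (c0 * p3 + B * b3) - a3 * (c0 * p2 + B * b2))) by ring.
  rewrite e1, e2, e3. ring.
Qed.

Section Loc.
Variables (Y y : R -> v3) (bt alpha beta sig lam : R -> R) (t0 del : R).
Hypothesis HYd3 : diff_upto 3 Y.
Hypothesis Hyd3 : diff_upto 3 y.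
Hypothesis HFL : forall s, vadd (Dv Y 3 s) (vscal (bt s) (Y s)) = vzero.
Hypothesis Hyeq : forall t, vadd (vadd (Dv y 3 t) (vscal (2 * alpha t) (Dv y 1 t)))
                  (vscal (Derive alpha t + beta t) (y t)) = vzero.
Hypothesis HdetY : forall s, det3 (Dv Y 2 s) (Dv Y 1 s) (Y s) = 1.
Hypothesis Hdety : forall t, det3 (Dv y 2 t) (Dv y 1 t) (y t) = 1.
Hypothesis Hdel : 0 < del.
Hypothesis Hrel : forall t, Rabs (t - t0) < del -> Y (sig t) = vscal (lam t) (y t).
Hypothesis Hcont : forall t, Rabs (t - t0) < del -> forall eps, 0 < eps -> exists eta, 0 < eta /\
     forall t', Rabs (t' - t) < eta -> Rabs (sig t' - sig t) < eps.

Let N t := Rabs (t - t0) < del.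

Lemma HY0 : forall s, Y s <> vzero.
Proof. intro s; eapply det_nz3; eauto. Qed.
Lemma Hy0 : forall s, y s <> vzero.
Proof. intro s; eapply det_nz3; eauto. Qed.

Lemma lam_nz : forall t, N t -> lam t <> 0.
Proof. intros t Ht. apply (vscal_ne _ (y t)); [apply Hy0|]. rewrite <- Hrel; auto. apply HY0. Qed.

Lemma dY : forall n s, (n <= 2)%nat ->
  ex_derive (Derive_n (cx Y) n) s /\ ex_derive (Derive_n (cy Y) n) s /\ ex_derive (Derive_n (cz Y) n) s.
Proof. intros n s Hn. destruct (HYd3 (S n) ltac:(lia) s) as [a [b c]]. repeat split; auto. Qed.
Lemma dy : forall n s, (n <= 2)%nat ->
  ex_derive (Derive_n (cx y) n) s /\ ex_derive (Derive_n (cy y) n) s /\ ex_derive (Derive_n (cz y) n) s.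
Proof. intros n s Hn. destruct (Hyd3 (S n) ltac:(lia) s) as [a [b c]]. repeat split; auto. Qed.

Lemma rel_x : forall t, N t -> cx Y (sig t) = lam t * cx y t.
Proof. intros t Ht. unfold cx. rewrite Hrel; auto. Qed.
Lemma rel_y : forall t, N t -> cy Y (sig t) = lam t * cy y t.
Proof. intros t Ht. unfold cy. rewrite Hrel; auto. Qed.
Lemma rel_z : forall t, N t -> cz Y (sig t) = lam t * cz y t.
Proof. intros t Ht. unfold cz. rewrite Hrel; auto. Qed.

Lemma sig_der : forall t, N t -> ex_derive sig t.
Proof.
  intros t Ht.
  set (p := Y (sig t)). set (q := Dv Y 1 (sig t)).
  set (a := vadd q (vscal (- (dot q p / nsq p)) p)).
  set (g := fun u => dot (vof Y u) a / dot (vof Y u) p).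
  set (f := fun u => dot (vof y u) a / dot (vof y u) p).
  assert (Hp : 0 < nsq p) by (apply nsq_pos, HY0).
  apply (inv_deriv sig f g t (del - Rabs (t - t0))
     ((dot q a * dot p p - dot p a * dot q p) / (dot p p * dot p p))).
  - unfold N in Ht; lra.
  - intros t' Ht'. assert (N t') by (unfold N; eapply ball_in; exact Ht').
    unfold g, f. rewrite !vof_eq, Hrel; auto.
    pose proof (lam_nz t' H). rewrite !dot_scal. apply ratio_scal; auto.
  - apply Hcont; auto.
  - apply deriv_ratio. apply (dY 0); lia. fold p. unfold nsq in Hp; lra.
  - apply Gexpr_nz with (r := Dv Y 2 (sig t)). apply HdetY.
  - eexists. apply deriv_ratio. apply (dy 0); lia.
    fold p. unfold p. rewrite Hrel; auto. 
    pose proof (nsq_pos _ (Hy0 t)). pose proof (lam_nz t Ht).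
    destruct (y t) as [[u1 u2] u3]. revert H. cbv [nsq dot vscal mkv vx vy vz fst snd]. intro.
    replace (u1 * (lam t * u1) + u2 * (lam t * u2) + u3 * (lam t * u3)) with (lam t * (u1 * u1 + u2 * u2 + u3 * u3)) by ring.
    apply Rmult_integral_contrapositive; split; lra.
Qed.

Lemma Nloc : forall t, N t -> locally t (fun u => N u).
Proof. intros t Ht. apply (ball_loc t0 del t Ht). Qed.

Lemma lam_der : forall t, N t -> ex_derive lam t.
Proof.
  intros t Ht.
  apply (ex_derive_ext_loc (fun u => dot (vof Y (sig u)) (vof y u) / nsq (vof y u))).
  { apply (filter_imp N); [|apply Nloc; auto]. intros u Hu.
    rewrite !vof_eq, Hrel, dot_scal by auto. pose proof (nsq_pos _ (Hy0 u)). unfold nsq in *. unfold Rdiv; rewrite Rmult_assoc, Rinv_r, Rmult_1_r; [reflexivity| lra]. }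
  pose proof (nsq_pos _ (Hy0 t)) as P. rewrite <- (vof_eq y t) in P. revert P.
  destruct (dY 0 (sig t)) as [a1 [a2 a3]]; [lia|].
  destruct (dy 0 t) as [b1 [b2 b3]]; [lia|].
  pose proof (sig_der t Ht).
  cbv [dot nsq vof mkv vx vy vz fst snd]. intro P. simpl Derive_n in *.
  auto_derive. repeat split; auto. lra.
Qed.

Lemma E1c : forall (Yc yc : R -> R) v, N v -> (forall w, N w -> Yc (sig w) = lam w * yc w) ->
  ex_derive Yc (sig v) -> ex_derive yc v ->
  Derive Yc (sig v) * Derive sig v = Derive lam v * yc v + lam v * Derive yc v.
Proof.
  intros Yc yc v Hv H d1 d2. apply G_E1; auto. apply (filter_imp N); [|apply Nloc; auto]. exact H.
  apply sig_der; auto. apply lam_der; auto.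
Qed.

Lemma E1v : forall u, N u ->
  vscal (Derive sig u) (Dv Y 1 (sig u)) = vadd (vscal (Derive lam u) (y u)) (vscal (lam u) (Dv y 1 u)).
Proof.
  intros u Hu.
  destruct (dY 0 (sig u)) as [a1 [a2 a3]]; [lia|].
  destruct (dy 0 u) as [b1 [b2 b3]]; [lia|].
  pose proof (sig_der u Hu). pose proof (lam_der u Hu).
  rewrite <- (vof_eq y u).
  apply v3_eq; cbv [vof vscal vadd mkv vx vy vz fst snd Dv Derive_n]; etafold;
    rewrite Rmult_comm; apply G_E1; auto; (apply (filter_imp N); [|apply Nloc; auto]).
  - apply rel_x.
  - apply rel_y.
  - apply rel_z.
Qed.

Lemma crossnz : forall u, N u -> 0 < nsq (cross (Dv Y 1 (sig u)) (y u)).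
Proof.
  intros u Hu. apply nsq_pos. intro E. pose proof (HdetY (sig u)) as D.
  rewrite Hrel, det_scal3, E in D by auto. revert D. cbv [dot vzero mkv vx vy vz fst snd]. intro D. lra.
Qed.

Definition F1 u := lam u * dot (cross (Dv y 1 u) (vof y u)) (cross (Dv Y 1 (sig u)) (vof y u))
   / nsq (cross (Dv Y 1 (sig u)) (vof y u)).

Lemma S1_eq : forall u, N u -> Derive sig u = F1 u.
Proof.
  intros u Hu. unfold F1. rewrite !vof_eq. pose proof (crossnz u Hu).
  pose proof (alg_S1 _ _ _ _ _ _ (E1v u Hu)). 
  apply (Rmult_eq_reg_r (nsq (cross (Dv Y 1 (sig u)) (y u)))); [|lra].
  rewrite H0. field. lra.
Qed.

Lemma sig2_der : forall t, N t -> ex_derive (Derive sig) t.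
Proof.
  intros t Ht.
  apply (ex_derive_ext_loc F1).
  { apply (filter_imp N); [|apply Nloc; auto]. intros u Hu. symmetry; apply S1_eq; auto. }
  pose proof (crossnz t Ht) as P. rewrite <- (vof_eq y t) in P. revert P.
  destruct (dY 1 (sig t)) as [a1 [a2 a3]]; [lia|].
  destruct (dy 0 t) as [b1 [b2 b3]]; [lia|].
  destruct (dy 1 t) as [c1 [c2 c3]]; [lia|].
  pose proof (sig_der t Ht). pose proof (lam_der t Ht).
  unfold F1. cbv [dot nsq cross vof Dv mkv vx vy vz fst snd]. intro P.
  auto_derive. repeat split; auto. apply Rgt_not_eq; exact P.
Qed.

Definition Lam1 u := (Derive sig u * dot (Dv Y 1 (sig u)) (vof y u) - lam u * dot (Dv y 1 u) (vof y u))
   / nsq (vof y u).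

Lemma L1_eq : forall u, N u -> Derive lam u = Lam1 u.
Proof.
  intros u Hu. unfold Lam1. rewrite !vof_eq. pose proof (nsq_pos _ (Hy0 u)).
  pose proof (alg_L1 _ _ _ _ _ _ (E1v u Hu)).
  apply (Rmult_eq_reg_r (nsq (y u))); [|lra].
  rewrite H0. field. lra.
Qed.

Lemma lam2_der : forall t, N t -> ex_derive (Derive lam) t.
Proof.
  intros t Ht.
  apply (ex_derive_ext_loc Lam1).
  { apply (filter_imp N); [|apply Nloc; auto]. intros u Hu. symmetry; apply L1_eq; auto. }
  pose proof (nsq_pos _ (Hy0 t)) as P. rewrite <- (vof_eq y t) in P. revert P.
  destruct (dY 1 (sig t)) as [a1 [a2 a3]]; [lia|].
  destruct (dy 0 t) as [b1 [b2 b3]]; [lia|].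
  destruct (dy 1 t) as [c1 [c2 c3]]; [lia|].
  pose proof (sig_der t Ht). pose proof (lam_der t Ht). pose proof (sig2_der t Ht).
  unfold Lam1. cbv [dot nsq cross vof Dv mkv vx vy vz fst snd]. intro P.
  auto_derive. repeat split; auto. lra.
Qed.

Lemma E2v : forall u, N u ->
  vadd (vscal (Derive sig u * Derive sig u) (Dv Y 2 (sig u))) (vscal (Derive (Derive sig) u) (Dv Y 1 (sig u)))
  = vadd (vadd (vscal (Derive (Derive lam) u) (y u)) (vscal (2 * Derive lam u) (Dv y 1 u))) (vscal (lam u) (Dv y 2 u)).
Proof.
  intros u Hu.
  destruct (dY 1 (sig u)) as [a1 [a2 a3]]; [lia|].
  destruct (dy 0 u) as [b1 [b2 b3]]; [lia|].
  destruct (dy 1 u) as [c1 [c2 c3]]; [lia|].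
  pose proof (sig_der u Hu). pose proof (lam_der u Hu).
  pose proof (sig2_der u Hu). pose proof (lam2_der u Hu).
  assert (L : locally u (fun v => N v)) by (apply Nloc; auto).
  assert (Lx : locally u (fun v => Derive (cx Y) (sig v) * Derive sig v = Derive lam v * cx y v + lam v * Derive (cx y) v)).
  { eapply filter_imp; [|exact L]. intros v Hv. apply E1c; auto; [apply rel_x | exact (proj1 (dY 0 (sig v) ltac:(lia))) | exact (proj1 (dy 0 v ltac:(lia)))]. }
  assert (Ly : locally u (fun v => Derive (cy Y) (sig v) * Derive sig v = Derive lam v * cy y v + lam v * Derive (cy y) v)).
  { eapply filter_imp; [|exact L]. intros v Hv. apply E1c; auto; [apply rel_y | exact (proj1 (proj2 (dY 0 (sig v) ltac:(lia)))) | exact (proj1 (proj2 (dy 0 v ltac:(lia))))]. }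
  assert (Lz : locally u (fun v => Derive (cz Y) (sig v) * Derive sig v = Derive lam v * cz y v + lam v * Derive (cz y) v)).
  { eapply filter_imp; [|exact L]. intros v Hv. apply E1c; auto; [apply rel_z | exact (proj2 (proj2 (dY 0 (sig v) ltac:(lia)))) | exact (proj2 (proj2 (dy 0 v ltac:(lia))))]. }
  rewrite <- (vof_eq y u).
  apply v3_eq; cbv [vof vscal vadd mkv vx vy vz fst snd Dv Derive_n]; etafold.
  - rewrite <- (G_E2 (cx Y) (cx y) sig lam u); auto; ring.
  - rewrite <- (G_E2 (cy Y) (cy y) sig lam u); auto; ring.
  - rewrite <- (G_E2 (cz Y) (cz y) sig lam u); auto; ring.
Qed.

Lemma S1_lam : forall u, N u -> Derive sig u = lam u.
Proof.
  intros u Hu. apply cube_eq; [apply lam_nz; auto|].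
  apply (alg_det (Dv Y 2 (sig u)) (Dv Y 1 (sig u)) (Y (sig u)) (Dv y 2 u) (Dv y 1 u) (y u)
     (Derive sig u) (Derive (Derive sig) u) (lam u) (Derive lam u) (Derive (Derive lam) u)); auto.
  apply E1v; auto. apply E2v; auto.
Qed.

Lemma S2_eq : forall u, N u -> Derive (Derive sig) u = Derive lam u.
Proof.
  intros u Hu. apply Derive_ext_loc. apply (filter_imp N); [|apply Nloc; auto]. exact S1_lam.
Qed.

Definition Qc (Yc yc : R -> R) v := Derive_n Yc 2 (sig v) * lam v - Derive lam v / lam v * Derive_n yc 1 v - Derive_n yc 2 v.
Definition M1 v := Derive (Derive lam) v / lam v - (Derive lam v / lam v) ^ 2.

Lemma Qrel_gen : forall (Yc yc : R -> R) v, N v ->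
  Derive (Derive Yc) (sig v) * Derive sig v * Derive sig v + Derive Yc (sig v) * Derive (Derive sig) v
  = Derive (Derive lam) v * yc v + 2 * Derive lam v * Derive yc v + lam v * Derive (Derive yc) v ->
  Derive Yc (sig v) * Derive sig v = Derive lam v * yc v + lam v * Derive yc v ->
  Qc Yc yc v = M1 v * yc v.
Proof.
  intros Yc yc v Hv E2 E1. unfold Qc, M1. simpl Derive_n.
  apply alg_Q with (B := Derive Yc (sig v)) (S := Derive sig v) (S2 := Derive (Derive sig) v).
  - etafold. rewrite Rmult_comm at 1. rewrite <- E1. ring.
  - etafold. rewrite <- E2. ring.
  - apply S1_lam; auto.
  - apply S2_eq; auto.
  - apply lam_nz; auto.
Qed.

Section Comp.
Variables (Yc yc : R -> R).
Hypothesis hrel : forall w, N w -> Yc (sig w) = lam w * yc w.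
Hypothesis hYc : forall n s, (n <= 2)%nat -> ex_derive (Derive_n Yc n) s.
Hypothesis hyc : forall n s, (n <= 2)%nat -> ex_derive (Derive_n yc n) s.

Lemma E2c : forall v, N v ->
  Derive (Derive Yc) (sig v) * Derive sig v * Derive sig v + Derive Yc (sig v) * Derive (Derive sig) v
  = Derive (Derive lam) v * yc v + 2 * Derive lam v * Derive yc v + lam v * Derive (Derive yc) v.
Proof.
  intros v Hv. apply G_E2.
  - apply (filter_imp N); [|apply Nloc; auto]. intros w Hw. apply E1c; auto.
    exact (hYc 0 (sig w) ltac:(lia)). exact (hyc 0 w ltac:(lia)).
  - exact (hYc 1 (sig v) ltac:(lia)).
  - apply sig_der; auto.
  - apply sig2_der; auto.
  - apply lam_der; auto.
  - apply lam2_der; auto.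
  - exact (hyc 0 v ltac:(lia)).
  - exact (hyc 1 v ltac:(lia)).
Qed.

Lemma Qrel_c : forall v, N v -> Qc Yc yc v = M1 v * yc v.
Proof.
  intros v Hv. apply Qrel_gen; auto. apply E2c; auto. apply E1c; auto.
  exact (hYc 0 (sig v) ltac:(lia)). exact (hyc 0 v ltac:(lia)).
Qed.

Lemma Qc_der : forall v, N v -> is_derive (Qc Yc yc) v
  (Derive (Derive_n Yc 2) (sig v) * Derive sig v * lam v + Derive_n Yc 2 (sig v) * Derive lam v
   - ((Derive (Derive lam) v * lam v - Derive lam v * Derive lam v)/(lam v * lam v)) * Derive_n yc 1 v
   - Derive lam v / lam v * Derive (Derive_n yc 1) v - Derive (Derive_n yc 2) v).
Proof.
  intros v Hv. unfold Qc. apply G_Q.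
  - exact (hYc 2 (sig v) ltac:(lia)).
  - apply sig_der; auto.
  - apply lam_der; auto.
  - apply lam2_der; auto.
  - exact (hyc 1 v ltac:(lia)).
  - exact (hyc 2 v ltac:(lia)).
  - apply lam_nz; auto.
Qed.
End Comp.

Lemma Nt0 : N t0.
Proof. unfold N. rewrite Rminus_diag, Rabs_R0. auto. Qed.

Lemma M1_der : ex_derive M1 t0.
Proof.
  set (Mf := fun v => (Qc (cx Y) (cx y) v * cx y v + Qc (cy Y) (cy y) v * cy y v + Qc (cz Y) (cz y) v * cz y v)
     / nsq (vof y v)).
  apply (ex_derive_ext_loc Mf).
  { apply (filter_imp N); [|apply Nloc; apply Nt0]. intros v Hv. unfold Mf.
    rewrite !Qrel_c; auto.
    - pose proof (nsq_pos _ (Hy0 v)) as P. rewrite <- (vof_eq y v) in P. revert P.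
      cbv [nsq dot vof mkv vx vy vz fst snd]. intro P.
      unfold Rdiv.
      replace (M1 v * cx y v * cx y v + M1 v * cy y v * cy y v + M1 v * cz y v * cz y v) with
        (M1 v * (cx y v * cx y v + cy y v * cy y v + cz y v * cz y v)) by ring.
      rewrite Rmult_assoc, Rinv_r, Rmult_1_r; [reflexivity|lra].
    - apply rel_z.
    - intros n s Hn; exact (proj2 (proj2 (dY n s Hn))).
    - intros n s Hn; exact (proj2 (proj2 (dy n s Hn))).
    - apply rel_y.
    - intros n s Hn; exact (proj1 (proj2 (dY n s Hn))).
    - intros n s Hn; exact (proj1 (proj2 (dy n s Hn))).
    - apply rel_x.
    - intros n s Hn; exact (proj1 (dY n s Hn)).
    - intros n s Hn; exact (proj1 (dy n s Hn)). }
  assert (q1 : ex_derive (Qc (cx Y) (cx y)) t0).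
  { eexists; apply Qc_der; try apply Nt0; intros n s Hn; first [exact (proj1 (dY n s Hn)) | exact (proj1 (dy n s Hn))]. }
  assert (q2 : ex_derive (Qc (cy Y) (cy y)) t0).
  { eexists; apply Qc_der; try apply Nt0; intros n s Hn; first [exact (proj1 (proj2 (dY n s Hn))) | exact (proj1 (proj2 (dy n s Hn)))]. }
  assert (q3 : ex_derive (Qc (cz Y) (cz y)) t0).
  { eexists; apply Qc_der; try apply Nt0; intros n s Hn; first [exact (proj2 (proj2 (dY n s Hn))) | exact (proj2 (proj2 (dy n s Hn)))]. }
  destruct (dy 0 t0) as [b1 [b2 b3]]; [lia|].
  pose proof (nsq_pos _ (Hy0 t0)) as P. rewrite <- (vof_eq y t0) in P. revert P.
  unfold Mf. cbv [nsq dot vof mkv vx vy vz fst snd]. intro P.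
  auto_derive. repeat split; auto. lra.
Qed.

Lemma comp_final : forall (Yc yc : R -> R), (forall w, N w -> Yc (sig w) = lam w * yc w) ->
  (forall n s, (n <= 2)%nat -> ex_derive (Derive_n Yc n) s) ->
  (forall n s, (n <= 2)%nat -> ex_derive (Derive_n yc n) s) ->
  (forall s, Derive_n Yc 3 s + bt s * Yc s = 0) ->
  Derive_n yc 3 t0 + 2 * alpha t0 * Derive_n yc 1 t0 + (Derive alpha t0 + beta t0) * yc t0 = 0 ->
  (- bt (sig t0) * lam t0 ^ 3 + Derive lam t0 / lam t0 * M1 t0 + Derive alpha t0 + beta t0 - Derive M1 t0) * yc t0
  + ((Derive lam t0 / lam t0) ^ 2 - 2 * M1 t0 + 2 * alpha t0) * Derive_n yc 1 t0 = 0.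
Proof.
  intros Yc yc hrel hYc hyc H3 H4.
  pose proof (Qc_der Yc yc hYc hyc t0 Nt0) as DQ.
  assert (DM : is_derive (fun v => M1 v * yc v) t0 (Derive M1 t0 * yc t0 + M1 t0 * Derive yc t0)).
  { pose proof M1_der. pose proof (hyc 0%nat t0 ltac:(lia)).
    auto_derive; [repeat split; auto | etafold; ring]. }
  apply (is_derive_ext_loc _ (Qc Yc yc)) in DM.
  2:{ apply (filter_imp N); [|apply Nloc; apply Nt0]. intros v Hv. symmetry. apply Qrel_c; auto. }
  pose proof (is_derive_unique _ _ _ DQ) as U1. pose proof (is_derive_unique _ _ _ DM) as U2.
  rewrite U1 in U2.
  apply alg_final with (a3 := Derive (Derive_n Yc 2) (sig t0)) (A := Derive_n Yc 2 (sig t0))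
    (S := Derive sig t0) (L2 := Derive (Derive lam) t0) (y2 := Derive_n yc 2 t0)
    (y3 := Derive (Derive_n yc 2) t0).
  - pose proof (H3 (sig t0)) as h. rewrite hrel in h by apply Nt0. simpl in h |- *. lra.
  - apply S1_lam, Nt0.
  - pose proof (Qrel_c Yc yc hrel hYc hyc t0 Nt0) as h. unfold Qc in h. exact h.
  - reflexivity.
  - simpl in H4 |- *. lra.
  - apply lam_nz, Nt0.
  - exact U2.
Qed.

Lemma final_t0 : lam t0 <> 0 /\ ex_derive lam t0 /\ ex_derive (Derive lam) t0 /\
  2 * (Derive (Derive lam) t0 / lam t0 - (Derive lam t0 / lam t0) ^ 2) = (Derive lam t0 / lam t0) ^ 2 + 2 * alpha t0.
Proof.
  split; [apply lam_nz, Nt0|]. split; [apply lam_der, Nt0|]. split; [apply lam2_der, Nt0|].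
  assert (HF : forall s, vadd (Dv Y 3 s) (vscal (bt s) (vof Y s)) = vzero) by (intro s; rewrite vof_eq; apply HFL).
  assert (Hy : vadd (vadd (Dv y 3 t0) (vscal (2 * alpha t0) (Dv y 1 t0))) (vscal (Derive alpha t0 + beta t0) (vof y t0)) = vzero)
    by (rewrite vof_eq; apply Hyeq).
  assert (B0 : (Derive lam t0 / lam t0) ^ 2 - 2 * M1 t0 + 2 * alpha t0 = 0).
  { apply (alg_extract (- bt (sig t0) * lam t0 ^ 3 + Derive lam t0 / lam t0 * M1 t0 + Derive alpha t0 + beta t0 - Derive M1 t0)
       _ (Dv y 2 t0) (Dv y 1 t0) (y t0) (Hdety t0)).
    - apply (comp_final (cx Y) (cx y)).
      + apply rel_x.
      + intros n s Hn; exact (proj1 (dY n s Hn)).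
      + intros n s Hn; exact (proj1 (dy n s Hn)).
      + intro s. pose proof (f_equal vx (HF s)) as h. cbv [vadd vscal vof mkv vzero vx vy vz fst snd Dv] in h. exact h.
      + pose proof (f_equal vx Hy) as h. cbv [vadd vscal vof mkv vzero vx vy vz fst snd Dv] in h. exact h.
    - apply (comp_final (cy Y) (cy y)).
      + apply rel_y.
      + intros n s Hn; exact (proj1 (proj2 (dY n s Hn))).
      + intros n s Hn; exact (proj1 (proj2 (dy n s Hn))).
      + intro s. pose proof (f_equal vy (HF s)) as h. cbv [vadd vscal vof mkv vzero vx vy vz fst snd Dv] in h. exact h.
      + pose proof (f_equal vy Hy) as h. cbv [vadd vscal vof mkv vzero vx vy vz fst snd Dv] in h. exact h.
    - apply (comp_final (cz Y) (cz y)).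
      + apply rel_z.
      + intros n s Hn; exact (proj2 (proj2 (dY n s Hn))).
      + intros n s Hn; exact (proj2 (proj2 (dy n s Hn))).
      + intro s. pose proof (f_equal vz (HF s)) as h. cbv [vadd vscal vof mkv vzero vx vy vz fst snd Dv] in h. exact h.
      + pose proof (f_equal vz Hy) as h. cbv [vadd vscal vof mkv vzero vx vy vz fst snd Dv] in h. exact h. }
  unfold M1 in B0. lra.
Qed.
End Loc.

Lemma deriv0_const : forall f : R -> R, (forall t, is_derive f t 0) -> forall a b, f a = f b.
Proof.
  intros f H a b. destruct (MVT_cor4 f (fun _ => 0) a (Rabs (b - a))) with (b := b) as [c [Hc _]].
  intros; apply H. lra. lra.
Qed.

Lemma shift_derive : forall (f g : R -> R) P t, (forall u, f (u + P) = g u) -> ex_derive f (t + P) -> ex_derive g t ->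
  Derive f (t + P) = Derive g t.
Proof.
  intros f g P t H d1 d2.
  assert (A : is_derive (fun u => f (u + P)) t (Derive f (t + P))).
  { auto_derive; [auto | etafold; ring]. }
  apply (is_derive_ext _ g) in A; [|exact H].
  apply is_derive_unique in A. rewrite <- A. reflexivity.
Qed.

Definition W (u v : R -> R) t := u t * Derive v t - Derive u t * v t.

Lemma W_const : forall alpha u v, hill_solution alpha u -> hill_solution alpha v -> forall t, is_derive (W u v) t 0.
Proof.
  intros alpha u v [du eu] [dv ev] t.
  pose proof (du 1%nat ltac:(lia) t) as u1. pose proof (du 2%nat ltac:(lia) t) as u2.
  pose proof (dv 1%nat ltac:(lia) t) as v1. pose proof (dv 2%nat ltac:(lia) t) as v2.
  simpl in u1, u2, v1, v2. pose proof (eu t) as e1. pose proof (ev t) as e2. simpl in e1, e2.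
  unfold W. auto_derive.
  - repeat split; auto.
  - etafold. change (Derive (Derive u) t + / 2 * alpha t * u t = 0) in e1.
    change (Derive (Derive v) t + / 2 * alpha t * v t = 0) in e2.
    replace (Derive (Derive u) t) with (- (/ 2 * alpha t * u t)) by lra.
    replace (Derive (Derive v) t) with (- (/ 2 * alpha t * v t)) by lra. ring.
Qed.

Lemma ratio_const : forall alpha x u, hill_solution alpha x -> hill_solution alpha u -> (forall t, 0 < x t) ->
  (forall t, W x u t = 0) -> forall t, u t = u 0 / x 0 * x t.
Proof.
  intros alpha x u [dx _] [du _] Hx HW t.
  assert (R : forall t, is_derive (fun s => u s / x s) t 0).
  { intro s. pose proof (dx 1%nat ltac:(lia) s) as d1. pose proof (du 1%nat ltac:(lia) s) as d2.
    simpl in d1, d2. pose proof (Hx s). pose proof (HW s) as h. unfold W in h.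
    auto_derive. repeat split; auto; lra. etafold.
    replace (Derive u s) with (Derive x s * u s / x s) by (field_simplify_eq; lra).
    field. lra. }
  pose proof (deriv0_const _ R t 0) as E. simpl in E. pose proof (Hx t); pose proof (Hx 0).
  rewrite <- E. field. lra.
Qed.

Lemma mono_eig : forall alpha x a b c d, hill_solution alpha x -> (forall t, 0 < x t) ->
  (forall t, x (t + 2 * PI) = x t) -> is_monodromy alpha a b c d -> has_eigenvalue_one a b c d.
Proof.
  intros alpha x a b c d hx Hpos Hper [x1 [x2 [h1 [h2 [hind hmon]]]]].
  assert (C1 : forall t, W x x1 t = W x x1 0) by (intro t; apply deriv0_const, W_const with alpha; auto).
  assert (C2 : forall t, W x x2 t = W x x2 0) by (intro t; apply deriv0_const, W_const with alpha; auto).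
  destruct hx as [dx ex]. destruct h1 as [d1 e1]. destruct h2 as [d2 e2].
  assert (D : forall (f : R -> R) t, (forall n, (n <= 2)%nat -> forall t, ex_derive_n f n t) -> ex_derive f t).
  { intros f t H. exact (H 1%nat ltac:(lia) t). }
  assert (Dx : Derive x (0 + 2 * PI) = Derive x 0).
  { apply shift_derive; auto. }
  assert (Dx1 : Derive x1 (0 + 2 * PI) = a * Derive x1 0 + b * Derive x2 0).
  { rewrite (shift_derive x1 (fun u => a * x1 u + b * x2 u)); auto.
    - apply is_derive_unique. pose proof (D x1 0 d1); pose proof (D x2 0 d2).
      auto_derive; [repeat split; auto| etafold; ring].
    - intro u; apply hmon.
    - pose proof (D x1 0 d1); pose proof (D x2 0 d2). auto_derive. repeat split; auto. }
  assert (Dx2 : Derive x2 (0 + 2 * PI) = c * Derive x1 0 + d * Derive x2 0).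
  { rewrite (shift_derive x2 (fun u => c * x1 u + d * x2 u)); auto.
    - apply is_derive_unique. pose proof (D x1 0 d1); pose proof (D x2 0 d2).
      auto_derive; [repeat split; auto| etafold; ring].
    - intro u; apply hmon.
    - pose proof (D x1 0 d1); pose proof (D x2 0 d2). auto_derive. repeat split; auto. }
  set (w1 := W x x1 0). set (w2 := W x x2 0).
  assert (E1 : w1 = a * w1 + b * w2).
  { unfold w1 at 1. rewrite <- (C1 (0 + 2 * PI)). unfold W at 1. rewrite Hper, Dx, Dx1, (proj1 (hmon 0)).
    unfold w1, w2, W. ring. }
  assert (E2 : w2 = c * w1 + d * w2).
  { unfold w2 at 1. rewrite <- (C2 (0 + 2 * PI)). unfold W at 1. rewrite Hper, Dx, Dx2, (proj2 (hmon 0)).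
    unfold w1, w2, W. ring. }
  destruct (Req_dec w1 0) as [z1|z1]; destruct (Req_dec w2 0) as [z2|z2];
    try (exists w1, w2; split; [tauto| split; lra]).
  exfalso.
  assert (K1 : forall t, x1 t = x1 0 / x 0 * x t).
  { apply (ratio_const alpha); [split; auto|split; auto|auto|]. intro t; rewrite C1; exact z1. }
  assert (K2 : forall t, x2 t = x2 0 / x 0 * x t).
  { apply (ratio_const alpha); [split; auto|split; auto|auto|]. intro t; rewrite C2; exact z2. }
  assert (P1 : forall t, x2 0 / x 0 * x1 t + - (x1 0 / x 0) * x2 t = 0).
  { intro t. rewrite (K1 t), (K2 t). ring. }
  destruct (hind _ _ P1) as [k2 k1].
  assert (P2 : forall t, 1 * x1 t + 0 * x2 t = 0).
  { intro t. rewrite (K1 t). assert (x1 0 / x 0 = 0) by lra. rewrite H. ring. }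
  destruct (hind _ _ P2). lra.
Qed.

Theorem corollary2 (k : nat) (K : v3 -> Prop) (alpha beta : R -> R) (y : R -> v3) :
  (5 <= k)%nat ->
  regular_convex_cone K ->
  Ck_pos_curved_boundary k K ->
  Ck (k - 4) alpha -> Ck (k - 5) beta ->
  (forall t, alpha (t + 2 * PI) = alpha t) ->
  (forall t, beta (t + 2 * PI) = beta t) ->
  (* y is a 2pi-periodic solution of y''' + 2 alpha y' + alpha' y + beta y = 0 *)
  diff_upto 3 y ->
  (forall t, y (t + 2 * PI) = y t) ->
  (forall t, vadd (vadd (Dv y 3 t) (vscal (2 * alpha t) (Dv y 1 t)))
                  (vscal (Derive alpha t + beta t) (y t)) = vzero) ->
  (forall t, det3 (Dv y 2 t) (Dv y 1 t) (y t) = 1) ->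
  (* y runs along the boundary of K, its projective image is gamma,
     and it makes exactly one turn per period *)
  (forall t, boundary K (y t)) ->
  (forall v, boundary K v -> v <> vzero ->
     exists t, 0 <= t < 2 * PI /\ proj_eq (y t) v) ->
  (forall s t, 0 <= s < 2 * PI -> 0 <= t < 2 * PI -> proj_eq (y s) (y t) -> s = t) ->
  (* the monodromy of x'' + 1/2 alpha x = 0 does not have eigenvalue 1 *)
  (exists a b c d, is_monodromy alpha a b c d /\ ~ has_eigenvalue_one a b c d) ->
  ~ global_periodic_FL_param K.
Proof.
  intros _ _ _ _ _ _ _ Hdy Hyper Heq Hdet Hbdy _ _ [a [b [c [d [Hmono Hne]]]]]
    [L [yt [bt [HL [Hdt [Hper [Hgam [Hinj [Hsurj [HdetY HFL]]]]]]]]]].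
  apply Hne.
  assert (HY0 : forall s, yt s <> vzero) by (intro s; eapply det_nz3; apply HdetY).
  assert (Hy0 : forall t, y t <> vzero) by (intro t; eapply det_nz3; apply Hdet).
  assert (HYd : forall s, ex_derive (cx yt) s /\ ex_derive (cy yt) s /\ ex_derive (cz yt) s).
  { intro s; exact (Hdt 1%nat ltac:(lia) s). }
  assert (Hyd : forall s, ex_derive (cx y) s /\ ex_derive (cy y) s /\ ex_derive (cz y) s).
  { intro s; exact (Hdy 1%nat ltac:(lia) s). }
  assert (HYsurj : forall t, exists s c, yt s = vscal c (y t)).
  { intro t. destruct (Hsurj (y t)) as [s [_ [_ [_ [cc [_ E]]]]]].
    - exists (y t). split; [apply Hbdy|]. split; [apply Hy0|].
      split; [apply Hy0|]. split; [apply Hy0|]. exists 1. split; [lra|].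
      unfold vscal, mkv, vx, vy, vz. destruct (y t) as [[? ?] ?]. simpl. f_equal; [f_equal|]; ring.
    - exists s, cc. exact E. }
  set (Lm := lam yt y).
  assert (HL0 : forall t0, Lm t0 <> 0 /\ ex_derive Lm t0 /\ ex_derive (Derive Lm) t0 /\
     2 * (Derive (Derive Lm) t0 / Lm t0 - (Derive Lm t0 / Lm t0) ^ 2) = (Derive Lm t0 / Lm t0) ^ 2 + 2 * alpha t0).
  { intro t0. destruct (local_sigma yt y L HL Hper Hinj HY0 Hy0 HYd Hyd HYsurj t0) as [sig [del [Hdel [Hrel Hcont]]]].
    exact (final_t0 yt y bt alpha beta sig Lm t0 del Hdt Hdy HFL Heq HdetY Hdet Hdel Hrel Hcont). }
  assert (HLper : forall t, Lm (t + 2 * PI) = Lm t).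
  { intro t. unfold Lm, lam. rewrite Hyper. reflexivity. }
  set (x := fun t => exp (- / 4 * ln (Lm t ^ 2))).
  assert (Hxpos : forall t, 0 < x t) by (intro t; apply exp_pos).
  assert (Hxper : forall t, x (t + 2 * PI) = x t) by (intro t; unfold x; rewrite HLper; reflexivity).
  set (g := fun t => - (Derive Lm t / Lm t) / 2 * x t).
  assert (Dx : forall t, is_derive x t (g t)).
  { intro t. destruct (HL0 t) as [n0 [d1 [d2 _]]]. unfold g, x.
    auto_derive.
    - repeat split; auto. apply pow2_gt_0; auto. 
    - etafold. replace (Lm t * (Lm t * 1)) with (Lm t ^ 2) by ring. field. auto. }
  assert (DxE : forall t, Derive x t = g t) by (intro t; apply is_derive_unique, Dx).
  assert (D2 : forall t, is_derive g t (- (/ 2 * alpha t * x t))).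
  { intro t. destruct (HL0 t) as [n0 [d1 [d2 rel]]].
    assert (dx : ex_derive x t) by (eexists; apply Dx).
    unfold g. clearbody x. auto_derive.
    - repeat split; auto.
    - etafold. rewrite DxE. unfold g.
      assert (E : Derive (Derive Lm) t = Lm t * (((Derive Lm t / Lm t) ^ 2 + 2 * alpha t) / 2 + (Derive Lm t / Lm t) ^ 2)).
      { apply (Rmult_eq_reg_r (/ Lm t)); [|apply Rinv_neq_0_compat; auto].
        rewrite (Rmult_comm (Lm t)), Rmult_assoc, Rinv_r, Rmult_1_r by auto. unfold Rdiv in rel |- *. lra. }
      rewrite E. field. auto. }
  apply (mono_eig alpha x); auto.
  split.
  - intros n Hn t. destruct n as [|[|[|n]]]; simpl.
    + exact I.
    + eexists; apply Dx.
    + apply (ex_derive_ext g). { intro u. symmetry. apply DxE. } eexists; apply D2.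
    + lia.
  - intro t. simpl.
    rewrite (Derive_ext (fun x0 => Derive (fun x1 => x x1) x0) g); [|intro u; apply DxE].
    rewrite (is_derive_unique _ _ _ (D2 t)). ring.
Qed.
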